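(* Let $s_0,t_0\ge 1$ be real numbers and let $\mathcal T$ be the infinite rooted tree of nodes generated from $(s_0,t_0)$ by the recursive rule described in the context. Put $p=(t_0-s_0)/2$. Then every node $N$ of $\mathcal T$, located at $(x,y)$, of depth $d$ and carrying parameters $(s,t)$, satisfies: (1) $s\ge 1$ and $t\ge 1$; (2) $(t-s)/2=p$; (3) the points $(x,y)+2^{-d}(-1,s)=(x-2^{-d},\,y+2^{-d}s)$ and $(x,y)+2^{-d}(1,t)=(x+2^{-d},\,y+2^{-d}t)$ both lie on the segment of $\mathbb R^2$ with extremities $(-1,s_0)$ and $(1,t_0)$.
   Context: Points of $\mathbb R^2$ are written $(x,y)$ (abscissa = space, ordinate = time). Given real numbers $s_0,t_0\ge 1$, a tree $\mathcal T$ is built recursively. Each node has a location $(x,y)\in\mathbb R^2$, a depth $d\in\mathbb N$ (the number of its ancestors that are split nodes), and a pair of real parameters $(s,t)$. The root is at $(0,0)$, has depth $0$ and parameters $(s_0,t_0)$. A node at $(x,y)$ of depth $d$ with parameters $(s,t)$ is: - a delay node if $s\ge 2$ and $t\ge 2$; it then has exactly one child, located at $(x,\,y+2^{-d})$, of depth $d$, with parameters $(s-1,\,t-1)$; - a split node otherwise (i.e. if $s<2$ or $t<2$); it then has exactly two children, both of depth $d+1$: a left child at $(x-2^{-(d+1)},\,y+2^{-(d+1)})$ with parameters $\bigl(2(s-\tfrac12),\,2(\tfrac{s+t}{2}-\tfrac12)\bigr)=(2s-1,\,s+t-1)$, and a right child at $(x+2^{-(d+1)},\,y+2^{-(d+1)})$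 with parameters $\bigl(2(\tfrac{s+t}{2}-\tfrac12),\,2(t-\tfrac12)\bigr)=(s+t-1,\,2t-1)$. The recursion never stops, so $\mathcal T$ is infinite. (Interpretation: a node at depth $d$ with parameters $(s,t)$ ''targets'' the segment from $(x,y)+2^{-d}(-1,s)$ to $(x,y)+2^{-d}(1,t)$.) *)

(* Defs.v *)
From Stdlib Require Import Reals Lra.
Open Scope R_scope.

Inductive is_node (s0 t0 : R) : R -> R -> nat -> R -> R -> Prop :=
| node_root : is_node s0 t0 0 0 0 s0 t0
| node_delay : forall x y d s t,
    is_node s0 t0 x y d s t -> 2 <= s -> 2 <= t ->
    is_node s0 t0 x (y + / 2 ^ d) d (s - 1) (t - 1)
| node_left : forall x y d s t,
    is_node s0 t0 x y d s t -> (s < 2 \/ t < 2) ->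
    is_node s0 t0 (x - / 2 ^ (S d)) (y + / 2 ^ (S d)) (S d)
      (2 * s - 1) (s + t - 1)
| node_right : forall x y d s t,
    is_node s0 t0 x y d s t -> (s < 2 \/ t < 2) ->
    is_node s0 t0 (x + / 2 ^ (S d)) (y + / 2 ^ (S d)) (S d)
      (s + t - 1) (2 * t - 1).

Definition on_segment (ax ay bx by_ px py : R) : Prop :=
  exists l : R, 0 <= l <= 1 /\
    px = (1 - l) * ax + l * bx /\ py = (1 - l) * ay + l * by_.

(* Main.v *)
Require Import Defs.
From Stdlib Require Import Reals Lra.
Open Scope R_scope.

Lemma inv_pow_S d : / 2 ^ (S d) = / 2 ^ d / 2.
Proof. simpl. field. apply pow_nonzero. lra. Qed.

Lemma inv_pow_pos d : 0 < / 2 ^ d.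
Proof. apply Rinv_0_lt_compat. apply pow_lt. lra. Qed.

Lemma inv_pow_le1 d : / 2 ^ d <= 1.
Proof.
  induction d. simpl. lra.
  rewrite inv_pow_S. pose proof (inv_pow_pos d). lra.
Qed.

Lemma inv_strong (s0 t0 : R) (hs0 : 1 <= s0) (ht0 : 1 <= t0) :
  forall (x y : R) (d : nat) (s t : R),
    is_node s0 t0 x y d s t ->
    (1 <= s /\ 1 <= t) /\ t - s = t0 - s0 /\
    -1 <= x - / 2 ^ d /\ x + / 2 ^ d <= 1 /\
    y + / 2 ^ d * s = s0 + (x - / 2 ^ d + 1) / 2 * (t0 - s0).
Proof.
  intros x y d s t H. induction H.
  - simpl. rewrite Rinv_1. lra.
  - destruct IHis_node as (? & ? & ? & ? & E). set (e := / 2 ^ d) in *.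
    repeat split; try lra; try (rewrite <- E; ring).
  - destruct IHis_node as (? & ? & ? & ? & E). rewrite inv_pow_S.
    set (e := / 2 ^ d) in *. pose proof (inv_pow_pos d). fold e in H5.
    repeat split; try lra; try nra; try (rewrite <- E; field).
  - destruct IHis_node as (? & ? & ? & ? & E). rewrite inv_pow_S.
    set (e := / 2 ^ d) in *. pose proof (inv_pow_pos d). fold e in H5.
    repeat split; try lra; try nra;
    try (replace (y + e / 2 + e / 2 * (s + t - 1)) with (y + e * s + e/2 * (t - s)) by field;
    rewrite E, H2; field).
Qed.

Theorem lemma1 (s0 t0 : R) (hs0 : 1 <= s0) (ht0 : 1 <= t0) :
  let p := (t0 - s0) / 2 in
  forall (x y : R) (d : nat) (s t : R),
    is_node s0 t0 x y d s t ->
    (1 <= s /\ 1 <= t) /\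
    (t - s) / 2 = p /\
    on_segment (-1) s0 1 t0 (x - / 2 ^ d) (y + / 2 ^ d * s) /\
    on_segment (-1) s0 1 t0 (x + / 2 ^ d) (y + / 2 ^ d * t).
Proof.
  intros p x y d s t H.
  destruct (inv_strong s0 t0 hs0 ht0 x y d s t H) as (Hst & D & L & R & E).
  pose proof (inv_pow_pos d). set (e := / 2 ^ d) in *.
  split; [exact Hst|]. split; [unfold p; lra|]. split.
  - exists ((x - e + 1) / 2). repeat split; try lra; try (rewrite E; ring).
  - exists ((x + e + 1) / 2). repeat split; try lra;
    try (replace (y + e * t) with (y + e * s + e * (t - s)) by ring;
    rewrite E, D; field).
Qed.
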